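(* Let $u,v>0$ and $0<a,b\le 1$, and consider the map $(x,y)\mapsto\big((1-a)x+auy(1-y),\ (1-b)y+bvx(1-x)\big)$ on $\mathbb{R}^2$. If $uv\ge 1$, then every (real) equilibrium $(x^*,y^* )$ of this map lies in $[0,1]\times[0,1]$.
   Context: An equilibrium of the map is a real fixed point $(x^*,y^* )$; equivalently (since $a,b>0$) a real solution of $x^*=uy^*(1-y^* )$, $y^*=vx^*(1-x^* )$. This is Kopel's duopoly map. *)

(* Defs.v *)
From Stdlib Require Import Reals.
Open Scope R_scope.

Definition kopel (u v a b : R) (p : R * R) : R * R :=
  let (x, y) := p in
  ((1 - a) * x + a * u * y * (1 - y), (1 - b) * y + b * v * x * (1 - x)).

Definition equilibrium (u v a b : R) (p : R * R) : Prop :=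
  kopel u v a b p = p.

(* Main.v *)
Require Import Defs.
From Stdlib Require Import Reals Lra Psatz.
Open Scope R_scope.

Lemma neg_aux (u v x y : R) : 0 < u -> 0 < v -> u * v >= 1 ->
  x = u*y*(1-y) -> y = v*x*(1-x) -> x < 0 -> False.
Proof.
  intros hu hv huv hx hy hneg.
  assert (hy0 : y < 0) by (rewrite hy; assert (0 < v*(-x)) by nra; nra).
  assert (h1 : -y > v*(-x)) by (rewrite hy at 1; assert (0 < v*(-x)) by nra; nra).
  assert (h2 : -x > u*(-y)) by (rewrite hx at 1; assert (0 < u*(-y)) by nra; nra).
  assert (h3 : u*(-y) > u*(v*(-x))) by nra.
  nra.
Qed.

Theorem proposition1 (u v a b x y : R) :
  0 < u -> 0 < v -> 0 < a <= 1 -> 0 < b <= 1 -> u * v >= 1 ->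
  equilibrium u v a b (x, y) ->
  0 <= x <= 1 /\ 0 <= y <= 1.
Proof.
  intros hu hv ha hb huv he.
  unfold equilibrium, kopel in he.
  injection he as e1 e2.
  assert (hx : x = u*y*(1-y)).
  { apply (Rmult_eq_reg_l a); [|lra]. nra. }
  assert (hy : y = v*x*(1-x)).
  { apply (Rmult_eq_reg_l b); [|lra]. nra. }
  assert (x0 : 0 <= x).
  { destruct (Rlt_or_le x 0) as [h|h]; [exfalso; exact (neg_aux u v x y hu hv huv hx hy h)|lra]. }
  assert (y0 : 0 <= y).
  { destruct (Rlt_or_le y 0) as [h|h]; [|lra]. exfalso.
    apply (neg_aux v u y x hv hu); try lra; nra. }
  split; split; try lra.
  - destruct (Rle_or_lt x 1) as [h|h]; [lra|].
    assert (0 < v*x) by nra. nra.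
  - destruct (Rle_or_lt y 1) as [h|h]; [lra|].
    assert (0 < u*y) by nra. nra.
Qed.
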